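(* Let $\vec f$ be a classical solution of (AP), (LP) or (JP) with smooth initial curve satisfying $A(0)>0$, whose maximal existence time $T$ is finite. Assume \[ \limsup_{t\to T^-}\max_{s\in\mathbb R/L(t)\mathbb Z}\kappa(s,t)=\infty . \] Then for all $t\in[0,T)$, \[ \max_{s\in\mathbb R/L(t)\mathbb Z}\kappa(s,t)\ge\frac{1}{\sqrt{2(T-t)}} . \]
   Context: Fix an integer $n\ge1$. For a closed plane curve $\vec f:\mathbb{R}/L\mathbb{Z}\to\mathbb{R}^2$ parametrized by arc length $s$ ($L>0$ its length): $\vec\nu$ is $\partial_s\vec f$ rotated counterclockwise by $\pi/2$, $\kappa=\partial_s^2\vec f\cdot\vec\nu$, rotation number $n=\frac1{2\pi}\int_0^L\kappa\,ds$, $A=-\frac12\int_0^L\vec f\cdot\vec\nu\,ds$, $\tilde\kappa=\kappa-\frac1L\int_0^L\kappa\,ds$. A classical solution on $[0,T)$ is a smooth family $\vec f(\cdot,t)$ of closed curves with rotation number $n$, each parametrized by arc length on $\mathbb{R}/L(t)\mathbb{Z}$, satisfying $\partial_t\vec f=(\tilde\kappa-g/L)\vec\nu$, where $g$ is one of: (AP) $g\equiv0$; (LP) $g=L\left(\int_0^L\kappa\,ds\right)^{-1}\int_0^L\tilde\kappa^2\,ds$; (JP) $g=\frac{L^2}{2A}-\int_0^L\kappa\,ds$; $T$ is the maximal existence time. *)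

(* Defs.v *)
From Stdlib Require Import Reals Lra ClassicalEpsilon.
Open Scope R_scope.

(* Total Riemann integral: the value of RiemannInt when f is integrable
   on [a,b] (independent of the proof), arbitrary otherwise. *)
Definition Rint (f : R -> R) (a b : R) : R :=
  epsilon (inhabits 0)
    (fun v => exists pr : Riemann_integrable f a b, RiemannInt pr = v).

(* Partial derivatives (total functions; meaningful where they exist). *)
Definition pdu (F : R -> R -> R) (u t : R) : R :=
  epsilon (inhabits 0) (fun l => derivable_pt_lim (fun v => F v t) u l).
Definition pdt (F : R -> R -> R) (u t : R) : R :=
  epsilon (inhabits 0) (fun l => derivable_pt_lim (fun s => F u s) t l).

Definition smooth_on (F : R -> R -> R) (T : R) : Prop :=
  exists D : nat -> nat -> R -> R -> R,
    (forall u t, 0 <= t < T -> D 0%nat 0%nat u t = F u t) /\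
    (forall i j u t, 0 <= t < T ->
        derivable_pt_lim (fun v => D i j v t) u (D (S i) j u t)) /\
    (forall i j u t, 0 < t < T ->
        derivable_pt_lim (fun s => D i j u s) t (D i (S j) u t)) /\
    (forall i j u0 t0, 0 <= t0 < T -> forall eps, eps > 0 ->
        exists delta, delta > 0 /\
          forall u t, 0 <= t < T -> Rabs (u - u0) < delta -> Rabs (t - t0) < delta ->
            Rabs (D i j u t - D i j u0 t0) < eps).

(* Curve f(u,t) = (X u t, Y u t), u in R/Z a fixed parameter; arc length
   element ds = speed du. *)
Section Geometry.
Variables X Y : R -> R -> R.

Definition speed (u t : R) : R := sqrt (pdu X u t ^ 2 + pdu Y u t ^ 2).
Definition nu1 (u t : R) : R := - pdu Y u t / speed u t.
Definition nu2 (u t : R) : R := pdu X u t / speed u t.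
(* kappa = d_s^2 f . nu *)
Definition curv (u t : R) : R :=
  (pdu X u t * pdu (pdu Y) u t - pdu Y u t * pdu (pdu X) u t) / speed u t ^ 3.
Definition len (t : R) : R := Rint (fun u => speed u t) 0 1.
Definition tot_curv (t : R) : R := Rint (fun u => curv u t * speed u t) 0 1.
Definition area (t : R) : R :=
  - / 2 * Rint (fun u => (X u t * nu1 u t + Y u t * nu2 u t) * speed u t) 0 1.
Definition curv_tilde (u t : R) : R := curv u t - / len t * tot_curv t.
Definition kmax (t : R) : R :=
  epsilon (inhabits 0)
    (fun k => is_lub (fun c => exists u, 0 <= u <= 1 /\ c = curv u t) k).
End Geometry.

Inductive Flow : Type := AP | LP | JP.

Definition gfun (fl : Flow) (X Y : R -> R -> R) (t : R) : R :=
  match fl with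
  | AP => 0
  | LP => len X Y t * / tot_curv X Y t *
            Rint (fun u => curv_tilde X Y u t ^ 2 * speed X Y u t) 0 1
  | JP => len X Y t ^ 2 / (2 * area X Y t) - tot_curv X Y t
  end.

Definition classical_solution (fl : Flow) (n : nat) (X Y : R -> R -> R) (T : R)
  : Prop :=
  0 < T /\ smooth_on X T /\ smooth_on Y T /\
  (forall u t, 0 <= t < T -> X (u + 1) t = X u t /\ Y (u + 1) t = Y u t) /\
  (forall u t, 0 <= t < T -> speed X Y u t > 0) /\
  (forall t, 0 <= t < T -> / (2 * PI) * tot_curv X Y t = INR n) /\
  (forall u t, 0 < t < T ->
     pdt X u t = (curv_tilde X Y u t - gfun fl X Y t / len X Y t) * nu1 X Y u t /\
     pdt Y u t = (curv_tilde X Y u t - gfun fl X Y t / len X Y t) * nu2 X Y u t).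

Definition maximal_solution (fl : Flow) (n : nat) (X Y : R -> R -> R) (T : R)
  : Prop :=
  classical_solution fl n X Y T /\
  ~ (exists T' (X' Y' : R -> R -> R), T < T' /\ classical_solution fl n X' Y' T' /\
       forall u t, 0 <= t < T -> X' u t = X u t /\ Y' u t = Y u t).

(* Main.v *)
Require Import Defs.
From Stdlib Require Import Reals Lra Psatz ClassicalEpsilon FunctionalExtensionality Classical ZArith Lia.
From Coquelicot Require Import Coquelicot.
Open Scope R_scope.

Lemma cont_of_ex (f : R -> R) x : ex_derive f x -> continuity_pt f x.
Proof. intros H. apply continuity_pt_filterlim. apply (@ex_derive_continuous R_AbsRing R_NormedModule). exact H. Qed.

Lemma cont_eps (h : R -> R) x : continuity_pt h x -> forall eps, eps > 0 ->
  exists d, d > 0 /\ forall y, Rabs (y - x) < d -> Rabs (h y - h x) < eps.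
Proof.
  intros H eps He. destruct (H eps He) as [d [Hd Hy]]. exists d. split; auto.
  intros y Hyx. destruct (Req_dec y x) as [->|Hne].
  - rewrite Rminus_diag, Rabs_R0; lra.
  - apply (Hy y). split; [unfold D_x, no_cond; auto| exact Hyx].
Qed.

Section JCS.
Variable T : R.
Definition JC (f : R -> R -> R) u0 t0 := forall eps, eps > 0 -> exists delta, delta > 0 /\
  forall u t, 0 <= t < T -> Rabs (u - u0) < delta -> Rabs (t - t0) < delta -> Rabs (f u t - f u0 t0) < eps.

Lemma JC_ext f g u0 t0 : (forall u t, f u t = g u t) -> JC f u0 t0 -> JC g u0 t0.
Proof. intros E H eps He. destruct (H eps He) as [d [Hd Hf]]. exists d; split; auto. intros; rewrite <- !E; auto. Qed.

Lemma JC_plus f g u0 t0 : JC f u0 t0 -> JC g u0 t0 -> JC (fun u t => f u t + g u t) u0 t0.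
Proof.
  intros Hf Hg eps He. destruct (Hf (eps/2) ltac:(lra)) as [d1 [Hd1 H1]]. destruct (Hg (eps/2) ltac:(lra)) as [d2 [Hd2 H2]].
  exists (Rmin d1 d2). split. apply Rmin_glb_lt; auto. intros u t Ht Hu Htt.
  pose proof (Rmin_l d1 d2); pose proof (Rmin_r d1 d2).
  specialize (H1 u t Ht ltac:(lra) ltac:(lra)). specialize (H2 u t Ht ltac:(lra) ltac:(lra)).
  replace (f u t + g u t - (f u0 t0 + g u0 t0)) with ((f u t - f u0 t0) + (g u t - g u0 t0)) by ring.
  pose proof (Rabs_triang (f u t - f u0 t0) (g u t - g u0 t0)). lra.
Qed.

Lemma JC_comp (h : R -> R) f u0 t0 : JC f u0 t0 -> continuity_pt h (f u0 t0) -> JC (fun u t => h (f u t)) u0 t0.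
Proof.
  intros Hf Hh eps He. destruct (cont_eps h _ Hh eps He) as [d1 [Hd1 H1]].
  destruct (Hf d1 Hd1) as [d [Hd H]]. exists d. split; [auto|]. intros u t Ht Hu Htt. apply H1. apply H; auto.
Qed.

Lemma JC_const c u0 t0 : JC (fun _ _ => c) u0 t0.
Proof. intros eps He. exists 1. split; [lra|]. intros. rewrite Rminus_diag, Rabs_R0; lra. Qed.

Lemma JC_opp f u0 t0 : JC f u0 t0 -> JC (fun u t => - f u t) u0 t0.
Proof.
  intros Hf. apply (JC_comp (fun x => - x)); auto. apply cont_of_ex; auto_derive; auto.
Qed.

Lemma JC_sq f u0 t0 : JC f u0 t0 -> JC (fun u t => f u t * f u t) u0 t0.
Proof.
  intros Hf. apply (JC_comp (fun x => x * x)); auto. apply cont_of_ex; auto_derive; auto.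
Qed.

Lemma JC_mult f g u0 t0 : JC f u0 t0 -> JC g u0 t0 -> JC (fun u t => f u t * g u t) u0 t0.
Proof.
  intros Hf Hg.
  apply (JC_ext (fun u t => / 4 * ((f u t + g u t) * (f u t + g u t)) + - (/4 * ((f u t + - g u t) * (f u t + - g u t))))).
  { intros; field. }
  apply JC_plus; [|apply JC_opp];
  apply (JC_comp (fun x => / 4 * x)); try (apply cont_of_ex; auto_derive; auto);
  apply JC_sq; apply JC_plus; auto; apply JC_opp; auto.
Qed.

Lemma JC_minus f g u0 t0 : JC f u0 t0 -> JC g u0 t0 -> JC (fun u t => f u t - g u t) u0 t0.
Proof. intros. apply (JC_ext (fun u t => f u t + - g u t)). intros; ring. apply JC_plus; auto. apply JC_opp; auto. Qed.

Lemma UL F t0 : 0 <= t0 < T -> (forall u, 0 <= u <= 1 -> JC F u t0) -> forall eps, eps > 0 ->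
  exists delta, delta > 0 /\ forall u t, 0 <= t < T -> Rabs (t - t0) < delta -> 0 <= u <= 1 ->
    Rabs (F u t - F u t0) < eps.
Proof.
  intros Ht0 HJ eps He.
  destruct (classic (exists delta, delta > 0 /\ forall u t, 0 <= t < T -> Rabs (t - t0) < delta -> 0 <= u <= 1 ->
    Rabs (F u t - F u t0) < eps)) as [H|Hn]; auto. exfalso.
  set (Pk := fun (k : nat) (p : R * R) => 0 <= snd p < T /\ Rabs (snd p - t0) < / (INR k + 1) /\ 0 <= fst p <= 1 /\ Rabs (F (fst p) (snd p) - F (fst p) t0) >= eps).
  assert (Hk : forall k, exists p, Pk k p).
  { intros k. apply NNPP. intros Hnp. apply Hn. exists (/ (INR k + 1)). split.
    - apply Rlt_gt, Rinv_0_lt_compat. pose proof (pos_INR k). lra.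
    - intros u t Ht Htt Hu. destruct (Rlt_le_dec (Rabs (F u t - F u t0)) eps) as [h|h]; auto.
      exfalso. apply Hnp. exists (u, t). unfold Pk; simpl. repeat split; auto; lra. }
  set (sq := fun k => epsilon (inhabits (0, 0)) (Pk k)).
  assert (Hsq : forall k, Pk k (sq k)) by (intros k; apply (epsilon_spec (inhabits (0,0)) (Pk k) (Hk k))).
  destruct (Bolzano_Weierstrass (fun k => fst (sq k)) (fun c => 0 <= c <= 1) (compact_P3 0 1)) as [l Hl].
  { intros k. apply (Hsq k). }
  assert (Hl0 : 0 <= l <= 1).
  { split.
    - destruct (Rle_lt_dec 0 l) as [h|h]; auto. exfalso.
      assert (Hp : 0 < - l) by lra.
      destruct (Hl (disc l (mkposreal _ Hp)) 0%nat) as [p [_ Hp2]].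
      { exists (mkposreal _ Hp). intros y Hy; exact Hy. }
      unfold disc in Hp2; simpl in Hp2. apply Rabs_lt_between in Hp2. destruct (Hsq p) as [_ [_ [H3 _]]]. lra.
    - destruct (Rle_lt_dec l 1) as [h|h]; auto. exfalso.
      assert (Hp : 0 < l - 1) by lra.
      destruct (Hl (disc l (mkposreal _ Hp)) 0%nat) as [p [_ Hp2]].
      { exists (mkposreal _ Hp). intros y Hy; exact Hy. }
      unfold disc in Hp2; simpl in Hp2. apply Rabs_lt_between in Hp2. destruct (Hsq p) as [_ [_ [H3 _]]]. lra. }
  destruct (HJ l Hl0 (eps / 2) ltac:(lra)) as [d0 [Hd0 Hc]].
  destruct (archimed_cor1 d0 Hd0) as [N [HN HN0]].
  destruct (Hl (disc l (mkposreal _ Hd0)) N) as [p [Hp Hp2]].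
  { exists (mkposreal _ Hd0). intros y Hy; exact Hy. }
  unfold disc in Hp2; simpl in Hp2.
  destruct (Hsq p) as [Ht [Htt [Hu Hge]]].
  assert (HpN : / (INR p + 1) <= / INR N).
  { apply Rinv_le_contravar. apply lt_0_INR; auto. apply le_INR in Hp. lra. }
  pose proof (Hc (fst (sq p)) (snd (sq p)) Ht Hp2 ltac:(lra)) as E1.
  pose proof (Hc (fst (sq p)) t0 Ht0 Hp2 ltac:(rewrite Rminus_diag, Rabs_R0; lra)) as E2.
  replace (F (fst (sq p)) (snd (sq p)) - F (fst (sq p)) t0) with
     ((F (fst (sq p)) (snd (sq p)) - F l t0) - (F (fst (sq p)) t0 - F l t0)) in Hge by ring.
  pose proof (Rabs_triang (F (fst (sq p)) (snd (sq p)) - F l t0) (- (F (fst (sq p)) t0 - F l t0))).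
  rewrite Rabs_Ropp in H. unfold Rminus at 1 in Hge. lra.
Qed.
End JCS.


Lemma quot_sign (f : R -> R) x h : h <> 0 -> f (x + h) - f x = ((f (x + h) - f x) / h) * h.
Proof. intros; field; auto. Qed.

Lemma max_d1 (f : R -> R) (x l : R) : is_derive f x l -> (forall y, f y <= f x) -> l = 0.
Proof.
  intros Hd Hm. apply is_derive_Reals in Hd.
  destruct (Rtotal_order l 0) as [Hl|[Hl|Hl]]; auto; exfalso.
  - destruct (Hd (- l) ltac:(lra)) as [d Hdd]. pose proof (cond_pos d).
    set (h := - (d / 2)).
    assert (Hh : h <> 0) by (unfold h; lra).
    assert (Hh2 : Rabs h < d) by (unfold h; rewrite Rabs_Ropp, Rabs_right; lra).
    specialize (Hdd h Hh Hh2). apply Rabs_lt_between in Hdd.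
    pose proof (Hm (x + h)). pose proof (quot_sign f x h Hh).
    assert (h < 0) by (unfold h; lra). nra.
  - destruct (Hd l ltac:(lra)) as [d Hdd]. pose proof (cond_pos d).
    set (h := d / 2).
    assert (Hh : h <> 0) by (unfold h; lra).
    assert (Hh2 : Rabs h < d) by (unfold h; rewrite Rabs_right; lra).
    specialize (Hdd h Hh Hh2). apply Rabs_lt_between in Hdd.
    pose proof (Hm (x + h)). pose proof (quot_sign f x h Hh).
    assert (h > 0) by (unfold h; lra).
    assert (h > 0) by (unfold h; lra). nra.
Qed.

Lemma max_d2 (f f1 : R -> R) (x l : R) : (forall y, is_derive f y (f1 y)) -> is_derive f1 x l ->
  (forall y, f y <= f x) -> l <= 0.
Proof.
  intros Hf Hd Hm.
  pose proof (max_d1 f x (f1 x) (Hf x) Hm) as H0.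
  apply is_derive_Reals in Hd.
  destruct (Rle_lt_dec l 0) as [Hl|Hl]; auto; exfalso.
  destruct (Hd l Hl) as [d Hdd]. pose proof (cond_pos d).
  destruct (MVT_cor2 f f1 x (x + d / 2)) as [z [Hz1 Hz2]]; [lra| intros; apply is_derive_Reals; apply Hf|].
  set (h := z - x).
  assert (Hh : h <> 0) by (unfold h; lra).
  assert (Hh2 : Rabs h < d) by (unfold h; rewrite Rabs_right; lra).
  specialize (Hdd h Hh Hh2). apply Rabs_lt_between in Hdd.
  pose proof (quot_sign f1 x h Hh).
  replace (x + h) with z in * by (unfold h; ring).
  pose proof (Hm (x + d / 2)).
  assert (h > 0) by (unfold h; lra).
  assert (f1 z > 0) by (rewrite H0 in *; nra). nra.
Qed.

Lemma DM (psi : R -> R) a b : a <= b ->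
  (forall c, a < c <= b -> exists d, d > 0 /\ forall h, 0 < h < d -> psi (c - h) < psi c) ->
  (forall c, a <= c < b -> forall e, e > 0 -> exists d, d > 0 /\ forall s, c < s < c + d -> s <= b -> psi c <= psi s + e) ->
  psi a <= psi b.
Proof.
  intros Hab H1 H2.
  set (E := fun y => exists x, y = - x /\ a <= x <= b /\ forall s, x <= s <= b -> psi s <= psi b).
  assert (Hb : bound E) by (exists (- a); intros y [x [-> [Hx _]]]; lra).
  assert (Hne : exists y, E y) by (exists (- b); exists b; split; auto; split; [lra|]; intros s Hs; replace s with b by lra; lra).
  destruct (completeness E Hb Hne) as [m [Hub Hleast]].
  set (c := - m).
  assert (Hmb : - b <= m) by (apply Hub; exists b; split; auto; split; [lra|]; intros s Hs; replace s with b by lra; lra).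
  assert (Hma : m <= - a) by (apply Hleast; intros y [x [-> [Hx _]]]; lra).
  assert (C1 : forall s, c < s <= b -> psi s <= psi b).
  { intros s Hs. destruct (classic (exists y, E y /\ y > - s)) as [[y [[x [-> [Hx Hx2]]] Hy]]|Hno].
    - apply Hx2. lra.
    - exfalso. assert (m <= - s).
      { apply Hleast. intros y Hy. destruct (Rle_lt_dec y (- s)) as [h|h]; auto. exfalso. apply Hno. exists y; split; auto. }
      unfold c in Hs. lra. }
  assert (C2 : psi c <= psi b).
  { destruct (Req_dec c b) as [->|Hcb]; [lra|].
    destruct (Rle_lt_dec (psi c) (psi b)) as [h|h]; auto. exfalso.
    assert (Hcb1 : c <= b) by (unfold c; lra).
    assert (Hcb2 : c < b) by (destruct (Rle_lt_or_eq_dec _ _ Hcb1); [auto|contradiction]).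
    destruct (H2 c ltac:(unfold c in *; lra) ((psi c - psi b) / 2) ltac:(lra)) as [d [Hd Hs]].
    set (s := c + Rmin d (b - c) / 2).
    assert (Hm1 : 0 < Rmin d (b - c)) by (apply Rmin_glb_lt; unfold c in *; lra).
    pose proof (Rmin_l d (b - c)). pose proof (Rmin_r d (b - c)).
    specialize (Hs s ltac:(unfold s; lra) ltac:(unfold s; lra)).
    pose proof (C1 s ltac:(unfold s; lra)). lra. }
  assert (C3 : c = a).
  { destruct (Req_dec c a) as [h|Hca]; auto. exfalso.
    assert (Hca1 : a <= c) by (unfold c; lra).
    assert (Hca2 : a < c) by (destruct (Rle_lt_or_eq_dec _ _ Hca1); [auto|subst; congruence]).
    destruct (H1 c ltac:(unfold c in *; lra)) as [d [Hd Hh]].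
    set (x := Rmax a (c - d / 2)).
    assert (Hx : E (- x)).
    assert (Hxa : a <= x) by apply Rmax_l. assert (Hxr : c - d / 2 <= x) by apply Rmax_r.
    assert (Hxc : x <= c) by (unfold x; apply Rmax_lub; unfold c in *; lra).
    { exists x. split; auto.
      split; [unfold c in *; lra|]. intros s Hs.
      destruct (Rlt_le_dec s c) as [hs|hs].
      - specialize (Hh (c - s) ltac:(lra)). replace (c - (c - s)) with s in Hh by ring. lra.
      - destruct (Req_dec s c) as [->|hs2]; auto. apply C1. lra. }
    pose proof (Hub _ Hx). assert (x < c).
    { unfold x. apply Rmax_lub_lt; unfold c in *; lra. }
    unfold c in *; lra. }
  rewrite <- C3. exact C2.
Qed.

Lemma area_pos (A Lf : R -> R) (g0 T : R) : 0 < T -> g0 > 0 ->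
  (forall e, e > 0 -> exists d, d > 0 /\ forall t, 0 <= t < d -> t < T -> Rabs (A t - A 0) < e) ->
  A 0 > 0 ->
  (forall t, 0 < t < T -> is_derive A t (Lf t ^ 2 / (2 * A t) - g0)) ->
  (forall t, 0 < t < T -> Lf t > 0) ->
  (forall t, 0 < t < T -> forall e, e > 0 -> exists d, d > 0 /\ forall s, Rabs (s - t) < d -> Rabs (Lf s - Lf t) < e) ->
  forall t, 0 < t < T -> A t >= 0.
Proof.
  intros HT Hg0 Hc0 HA0 Hd HL HLc t1 Ht1.
  destruct (Rle_lt_dec 0 (A t1)) as [h|Hneg]; [lra|exfalso].
  set (E := fun x => 0 <= x <= t1 /\ forall s, 0 <= s <= x -> A s > 0).
  assert (Hb : bound E) by (exists t1; intros x [Hx _]; lra).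
  assert (Hne : exists x, E x) by (exists 0; split; [lra|]; intros s Hs; replace s with 0 by lra; auto).
  destruct (completeness E Hb Hne) as [m [Hub Hleast]].
  assert (Hmt1 : m <= t1) by (apply Hleast; intros x [Hx _]; lra).
  assert (Hm0 : m > 0).
  { destruct (Hc0 (A 0 / 2) ltac:(lra)) as [d [Hd0 Hdd]].
    set (x := Rmin (d / 2) (t1 / 2)).
    assert (Hx : 0 < x) by (unfold x; apply Rmin_glb_lt; lra).
    assert (Ex : E x).
    { split. unfold x in *; pose proof (Rmin_r (d/2) (t1/2)); lra.
      intros s Hs. pose proof (Rmin_l (d/2) (t1/2)). pose proof (Rmin_r (d/2) (t1/2)).
      specialize (Hdd s ltac:(unfold x in *; lra) ltac:(unfold x in *; lra)). apply Rabs_lt_between in Hdd. lra. }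
    pose proof (Hub x Ex). lra. }
  assert (Hbelow : forall s, 0 <= s < m -> A s > 0).
  { intros s Hs. destruct (classic (exists x, E x /\ x > s)) as [[x [[Hx1 Hx2] Hxs]]|Hno].
    - apply Hx2. lra.
    - exfalso. assert (m <= s).
      { apply Hleast. intros x Ex. destruct (Rle_lt_dec x s) as [h|h]; auto. exfalso. apply Hno. exists x. auto. }
      lra. }
  assert (HmT : 0 < m < T) by lra.
  assert (HcA : continuity_pt A m).
  { apply continuity_pt_filterlim. apply (@ex_derive_continuous R_AbsRing R_NormedModule).
    eexists. apply Hd. auto. }
  destruct (Rlt_le_dec 0 (A m)) as [Hp|Hnp].
  -
    assert (Hmlt : m < t1) by (destruct (Rle_lt_or_eq_dec _ _ Hmt1); auto; subst; lra).
    destruct (HcA (A m) Hp) as [d [Hd0 Hdd]].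
    set (x := Rmin (m + d / 2) t1).
    assert (Ex : E x).
    { pose proof (Rmin_l (m + d/2) t1). pose proof (Rmin_r (m + d/2) t1).
      assert (m < x) by (unfold x; apply Rmin_glb_lt; lra).
      split; [unfold x in *; lra|]. intros s Hs.
      destruct (Rlt_le_dec s m) as [hs|hs]; [apply Hbelow; lra|].
      destruct (Req_dec s m) as [->|hs2]; auto.
      assert (Hsm : Rabs (s - m) < d) by (rewrite Rabs_right; unfold x in *; lra).
      specialize (Hdd s (conj (conj I (not_eq_sym hs2)) Hsm)). simpl in Hdd. unfold R_dist in Hdd.
      apply Rabs_lt_between in Hdd. lra. }
    pose proof (Hub x Ex). assert (m < x) by (unfold x; apply Rmin_glb_lt; lra). lra.
  - set (Lm := Lf m). assert (HLm : Lm > 0) by (apply HL; auto).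
    destruct (HLc m HmT (Lm / 2) ltac:(lra)) as [d1 [Hd1 HL1]].
    set (eta := (Lm / 2) ^ 2 / (2 * g0)).
    assert (Heta : eta > 0) by (unfold eta; apply Rdiv_lt_0_compat; nra).
    destruct (HcA eta Heta) as [d2 [Hd2 HA2]].
    set (d := Rmin (Rmin d1 d2) m).
    assert (Hd0 : d > 0) by (unfold d; repeat apply Rmin_glb_lt; lra).
    pose proof (Rmin_l (Rmin d1 d2) m). pose proof (Rmin_r (Rmin d1 d2) m).
    pose proof (Rmin_l d1 d2). pose proof (Rmin_r d1 d2). fold d in H, H0.
    destruct (MVT_cor2 A (fun s => Lf s ^ 2 / (2 * A s) - g0) (m - d / 2) m ltac:(lra)) as [xi [Hxi1 Hxi2]].
    { intros c Hc. apply is_derive_Reals. apply Hd. lra. }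
    assert (HAxi : A xi > 0) by (apply Hbelow; lra).
    assert (HAxi2 : A xi < eta).
    { destruct (Req_dec xi m) as [->|hne]; [lra|].
      assert (Hdist : dist R_met xi m < d2). { unfold dist, R_met, R_dist. simpl. rewrite Rabs_left; lra. }
      specialize (HA2 xi (conj (conj I (not_eq_sym hne)) Hdist)). simpl in HA2. unfold R_dist in HA2.
      apply Rabs_lt_between in HA2. lra. }
    assert (HLxi : Lf xi > Lm / 2).
    { specialize (HL1 xi ltac:(rewrite Rabs_left; lra)). apply Rabs_lt_between in HL1. fold Lm in HL1. lra. }
    assert (Hpos : Lf xi ^ 2 / (2 * A xi) - g0 > 0).
    { assert (Hsq : Lf xi ^ 2 > (Lm / 2) ^ 2) by nra.
      assert (Lf xi ^ 2 / (2 * A xi) > (Lm / 2) ^ 2 / (2 * eta)).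
      { apply (Rlt_trans _ ((Lm / 2) ^ 2 / (2 * A xi))).
        - unfold Rdiv. apply Rmult_lt_compat_l. nra. apply Rinv_lt_contravar; nra.
        - unfold Rdiv. apply Rmult_lt_compat_r. apply Rinv_0_lt_compat; lra. auto. }
      assert ((Lm / 2) ^ 2 / (2 * eta) = g0) by (unfold eta; field; split; nra).
      lra. }
    assert (Hlo : A (m - d / 2) > 0) by (apply Hbelow; lra).
    assert (A m - A (m - d / 2) > 0) by (rewrite Hxi1; apply Rmult_lt_0_compat; lra).
    lra.
Qed.


Lemma is_der_lim (f : R -> R) (x l : R) : is_derive f x l <-> derivable_pt_lim f x l.
Proof. apply is_derive_Reals. Qed.

Lemma der_uniq (f : R -> R) (x l1 l2 : R) : is_derive f x l1 -> is_derive f x l2 -> l1 = l2.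
Proof. intros H1 H2. apply is_derive_unique in H1. apply is_derive_unique in H2. congruence. Qed.

Lemma pdu_val (F : R -> R -> R) (u t l : R) : is_derive (fun v => F v t) u l -> pdu F u t = l.
Proof.
  intros H. unfold pdu.
  assert (Hex : exists l, derivable_pt_lim (fun v => F v t) u l) by (exists l; now apply is_der_lim).
  pose proof (epsilon_spec (inhabits 0) _ Hex) as He.
  apply (der_uniq (fun v => F v t) u); [apply is_der_lim; exact He | exact H].
Qed.

Lemma pdt_val (F : R -> R -> R) (u t l : R) : is_derive (fun s => F u s) t l -> pdt F u t = l.
Proof.
  intros H. unfold pdt.
  assert (Hex : exists l, derivable_pt_lim (fun s => F u s) t l) by (exists l; now apply is_der_lim).
  pose proof (epsilon_spec (inhabits 0) _ Hex) as He.
  apply (der_uniq (fun s => F u s) t); [apply is_der_lim; exact He | exact H].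
Qed.

Lemma Rint_val f a b (pr : Riemann_integrable f a b) : Rint f a b = RiemannInt pr.
Proof.
  unfold Rint.
  assert (Hex : exists v, exists pr : Riemann_integrable f a b, RiemannInt pr = v) by (exists (RiemannInt pr); now exists pr).
  destruct (epsilon_spec (inhabits 0) _ Hex) as [pr' Hp]. rewrite <- Hp. apply RiemannInt_P5.
Qed.

Lemma Rint_RInt f a b : Riemann_integrable f a b -> Rint f a b = RInt f a b.
Proof. intros pr. rewrite (Rint_val f a b pr). symmetry. apply RInt_Reals. Qed.

Lemma Derive_eq (f : R -> R) (x l : R) : is_derive f x l -> Derive f x = l.
Proof. apply is_derive_unique. Qed.

Lemma core_alg (a b p q r w S cc G2 A B P Q : R) :
  S > 0 -> S ^ 2 = a ^ 2 + b ^ 2 ->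
  let kap := (a * q - b * p) / S ^ 3 in
  let V0 := kap - cc in
  let Sd := (a * p + b * q) / S in
  let Sdd := (p * p + a * r + q * q + b * w) / S - (a * p + b * q) * Sd / S ^ 2 in
  A = V0 * (- q / S + b * Sd / S ^ 2) ->
  B = V0 * (p / S - a * Sd / S ^ 2) ->
  P = G2 * (- b / S) + V0 * (- w / S + q * Sd / S ^ 2 + q * Sd / S ^ 2 + b * Sdd / S ^ 2 - 2 * b * Sd ^ 2 / S ^ 3) ->
  Q = G2 * (a / S) + V0 * (r / S - p * Sd / S ^ 2 - p * Sd / S ^ 2 - a * Sdd / S ^ 2 + 2 * a * Sd ^ 2 / S ^ 3) ->
  (A * q + a * Q - B * p - b * P) / S ^ 3 - 3 * (a * q - b * p) * ((a * A + b * B) / S) / S ^ 4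
  = G2 / S ^ 2 + kap ^ 2 * V0.
Proof.
  intros HS Hrel kap V0 Sd Sdd HA HB HP HQ.
  subst A B P Q. unfold V0, kap, Sdd, Sd.
  apply Rminus_diag_uniq.
  transitivity ((S ^ 2 - a ^ 2 - b ^ 2) * ((-1)*S^7*G2 + (1)*q^2*S^5*cc + (-1)*a*r*S^5*cc + (1)*p^2*S^5*cc + (-1)*b*w*S^5*cc + (3)*b^2*q^2*S^3*cc + (3)*a^2*p^2*S^3*cc + (6)*a*b*p*q*S^3*cc + (-1)*a*q^3*S^2 + (1)*b*p*q^2*S^2 + (1)*a^2*q*r*S^2 + (-1)*a*b*p*r*S^2 + (-1)*a*p^2*q*S^2 + (1)*b*p^3*S^2 + (1)*a*b*q*w*S^2 + (-1)*b^2*p*w*S^2 + (-3)*a*b^2*q^3 + (3)*b^3*p*q^2 + (-3)*a^3*p^2*q + (3)*a^2*b*p^3 + (-6)*a^2*b*p*q^2 + (6)*a*b^2*p^2*q) / S ^ 11).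
  - field. lra.
  - rewrite Hrel. replace (a ^ 2 + b ^ 2 - a ^ 2 - b ^ 2) with 0 by ring. unfold Rdiv. ring.
Qed.

Lemma exd_cont (f : R -> R) x : ex_derive f x -> continuous f x.
Proof. intros H. apply (@ex_derive_continuous R_AbsRing R_NormedModule). exact H. Qed.
Lemma Rint_ex (f : R -> R) : (forall x, 0 <= x <= 1 -> ex_derive f x) -> ex_RInt f 0 1.
Proof. intros H. apply (@ex_RInt_continuous R_CompleteNormedModule). intros z Hz.
  rewrite Rmin_left, Rmax_right in Hz by lra. apply exd_cont. apply H; auto. Qed.

Section Main.
Variables (X Y : R -> R -> R) (T : R) (DX DY : nat -> nat -> R -> R -> R).
Hypothesis HT : 0 < T.
Hypothesis DX0 : forall u t, 0 <= t < T -> DX 0%nat 0%nat u t = X u t.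
Hypothesis DXu : forall i j u t, 0 <= t < T -> derivable_pt_lim (fun v => DX i j v t) u (DX (S i) j u t).
Hypothesis DXt : forall i j u t, 0 < t < T -> derivable_pt_lim (fun s => DX i j u s) t (DX i (S j) u t).
Hypothesis DXc : forall i j u0 t0, 0 <= t0 < T -> forall eps, eps > 0 ->
        exists delta, delta > 0 /\
          forall u t, 0 <= t < T -> Rabs (u - u0) < delta -> Rabs (t - t0) < delta ->
            Rabs (DX i j u t - DX i j u0 t0) < eps.
Hypothesis DY0 : forall u t, 0 <= t < T -> DY 0%nat 0%nat u t = Y u t.
Hypothesis DYu : forall i j u t, 0 <= t < T -> derivable_pt_lim (fun v => DY i j v t) u (DY (S i) j u t).
Hypothesis DYt : forall i j u t, 0 < t < T -> derivable_pt_lim (fun s => DY i j u s) t (DY i (S j) u t).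
Hypothesis DYc : forall i j u0 t0, 0 <= t0 < T -> forall eps, eps > 0 ->
        exists delta, delta > 0 /\
          forall u t, 0 <= t < T -> Rabs (u - u0) < delta -> Rabs (t - t0) < delta ->
            Rabs (DY i j u t - DY i j u0 t0) < eps.
Hypothesis Hper : forall u t, 0 <= t < T -> X (u + 1) t = X u t /\ Y (u + 1) t = Y u t.
Hypothesis Hspeed : forall u t, 0 <= t < T -> speed X Y u t > 0.

Lemma dXu i j u t : 0 <= t < T -> is_derive (fun v => DX i j v t) u (DX (S i) j u t).
Proof. intros; apply is_der_lim; auto. Qed.
Lemma dYu i j u t : 0 <= t < T -> is_derive (fun v => DY i j v t) u (DY (S i) j u t).
Proof. intros; apply is_der_lim; auto. Qed.
Lemma dXt i j u t : 0 < t < T -> is_derive (fun s => DX i j u s) t (DX i (S j) u t).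
Proof. intros; apply is_der_lim; auto. Qed.
Lemma dYt i j u t : 0 < t < T -> is_derive (fun s => DY i j u s) t (DY i (S j) u t).
Proof. intros; apply is_der_lim; auto. Qed.

Lemma pduX u t : 0 <= t < T -> pdu X u t = DX 1%nat 0%nat u t.
Proof.
  intros Ht. apply pdu_val. eapply is_derive_ext; [|apply (dXu 0 0 u t Ht)].
  intros v; simpl. apply DX0; auto.
Qed.
Lemma pduY u t : 0 <= t < T -> pdu Y u t = DY 1%nat 0%nat u t.
Proof.
  intros Ht. apply pdu_val. eapply is_derive_ext; [|apply (dYu 0 0 u t Ht)].
  intros v; simpl. apply DY0; auto.
Qed.
Lemma pduuX u t : 0 <= t < T -> pdu (pdu X) u t = DX 2%nat 0%nat u t.
Proof.
  intros Ht. apply pdu_val. eapply is_derive_ext; [|apply (dXu 1 0 u t Ht)].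
  intros v; simpl. rewrite pduX; auto.
Qed.
Lemma pduuY u t : 0 <= t < T -> pdu (pdu Y) u t = DY 2%nat 0%nat u t.
Proof.
  intros Ht. apply pdu_val. eapply is_derive_ext; [|apply (dYu 1 0 u t Ht)].
  intros v; simpl. rewrite pduY; auto.
Qed.

Lemma pdtX u t : 0 < t < T -> pdt X u t = DX 0%nat 1%nat u t.
Proof.
  intros Ht. apply pdt_val. eapply is_derive_ext_loc; [|apply (dXt 0 0 u t Ht)].
  assert (Hd : 0 < Rmin t (T - t)) by (apply Rmin_glb_lt; lra).
  exists (mkposreal _ Hd). intros s Hs. simpl in Hs. unfold ball in Hs; simpl in Hs.
  unfold AbsRing_ball, abs, minus, plus, opp in Hs; simpl in Hs.
  apply DX0. pose proof (Rmin_l t (T-t)); pose proof (Rmin_r t (T-t)).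
  apply Rabs_lt_between in Hs. lra.
Qed.
Lemma pdtY u t : 0 < t < T -> pdt Y u t = DY 0%nat 1%nat u t.
Proof.
  intros Ht. apply pdt_val. eapply is_derive_ext_loc; [|apply (dYt 0 0 u t Ht)].
  assert (Hd : 0 < Rmin t (T - t)) by (apply Rmin_glb_lt; lra).
  exists (mkposreal _ Hd). intros s Hs. simpl in Hs. unfold ball in Hs; simpl in Hs.
  unfold AbsRing_ball, abs, minus, plus, opp in Hs; simpl in Hs.
  apply DY0. pose proof (Rmin_l t (T-t)); pose proof (Rmin_r t (T-t)).
  apply Rabs_lt_between in Hs. lra.
Qed.

Definition x1 u t := DX 1%nat 0%nat u t.
Definition y1 u t := DY 1%nat 0%nat u t.
Definition x2 u t := DX 2%nat 0%nat u t.
Definition y2 u t := DY 2%nat 0%nat u t.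
Definition Sf u t := sqrt (x1 u t * x1 u t + y1 u t * y1 u t).
Definition kap u t := (x1 u t * y2 u t - y1 u t * x2 u t) / Sf u t ^ 3.

Lemma speed_eq u t : 0 <= t < T -> speed X Y u t = Sf u t.
Proof. intros Ht. unfold speed, Sf. rewrite pduX, pduY by auto. f_equal. unfold x1, y1. ring. Qed.
Lemma Sf_pos u t : 0 <= t < T -> Sf u t > 0.
Proof. intros Ht. rewrite <- speed_eq; auto. Qed.
Lemma Q_pos u t : 0 <= t < T -> x1 u t * x1 u t + y1 u t * y1 u t > 0.
Proof.
  intros Ht. pose proof (Sf_pos u t Ht). unfold Sf in H.
  destruct (Rle_lt_dec (x1 u t * x1 u t + y1 u t * y1 u t) 0) as [h|h]; auto.
  rewrite sqrt_neg_0 in H; auto; lra.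
Qed.
Lemma curv_eq u t : 0 <= t < T -> curv X Y u t = kap u t.
Proof.
  intros Ht. unfold curv, kap. rewrite pduX, pduY, pduuX, pduuY by auto.
  fold (speed X Y u t). rewrite speed_eq; auto.
Qed.
Lemma nu1_eq u t : 0 <= t < T -> nu1 X Y u t = - y1 u t / Sf u t.
Proof. intros Ht. unfold nu1. rewrite pduY, speed_eq by auto. reflexivity. Qed.
Lemma nu2_eq u t : 0 <= t < T -> nu2 X Y u t = x1 u t / Sf u t.
Proof. intros Ht. unfold nu2. rewrite pduX, speed_eq by auto. reflexivity. Qed.


Definition Sd u t := (x1 u t * x2 u t + y1 u t * y2 u t) / Sf u t.
Definition E1 u t := ((x1 u t * DY 3%nat 0%nat u t - y1 u t * DX 3%nat 0%nat u t) * Sf u t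
   - 3 * (x1 u t * y2 u t - y1 u t * x2 u t) * Sd u t) / Sf u t ^ 4.

Ltac exd0 := match goal with
  | |- ex_derive (fun x => DX ?i ?j x ?t) ?v => exists (DX (S i) j v t); apply dXu; lra
  | |- ex_derive (fun x => DY ?i ?j x ?t) ?v => exists (DY (S i) j v t); apply dYu; lra
  end.
Ltac rwD0 := repeat match goal with
  | |- context [Derive (fun x => DX ?i ?j x ?t) ?v] => rewrite (Derive_eq (fun x => DX i j x t) v (DX (S i) j v t)) by (apply dXu; lra)
  | |- context [Derive (fun x => DY ?i ?j x ?t) ?v] => rewrite (Derive_eq (fun x => DY i j x t) v (DY (S i) j v t)) by (apply dYu; lra)
  end.
Lemma G_der v c : 0 <= c < T -> is_derive (fun v => kap v c) v (E1 v c).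
Proof.
  intros Hc. pose proof (Q_pos v c Hc) as HQ. pose proof (Sf_pos v c Hc) as HS.
  unfold kap, E1, Sd, Sf, x1, y1, x2, y2 in *.
  auto_derive.
  - repeat split; try exd0; try lra; try (apply Rgt_not_eq; repeat apply Rmult_lt_0_compat; lra).
  - rwD0. simpl. field. lra.
Qed.

Ltac exd := match goal with
  | |- ex_derive (fun x => kap x ?t) ?v => exists (E1 v t); apply G_der; lra
  | |- ex_derive (fun x => DX ?i ?j x ?t) ?v => exists (DX (S i) j v t); apply dXu; lra
  | |- ex_derive (fun x => DY ?i ?j x ?t) ?v => exists (DY (S i) j v t); apply dYu; lra
  | |- ex_derive (fun x => DX ?i ?j ?u x) ?v => exists (DX i (S j) u v); apply dXt; lra
  | |- ex_derive (fun x => DY ?i ?j ?u x) ?v => exists (DY i (S j) u v); apply dYt; lra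
  end.

Ltac rwD := repeat match goal with
  | |- context [Derive (fun x => kap x ?t) ?v] => rewrite (Derive_eq (fun x => kap x t) v (E1 v t)) by (apply G_der; lra)
  | |- context [Derive (fun x => DX ?i ?j x ?t) ?v] => rewrite (Derive_eq (fun x => DX i j x t) v (DX (S i) j v t)) by (apply dXu; lra)
  | |- context [Derive (fun x => DY ?i ?j x ?t) ?v] => rewrite (Derive_eq (fun x => DY i j x t) v (DY (S i) j v t)) by (apply dYu; lra)
  | |- context [Derive (fun x => DX ?i ?j ?u x) ?v] => rewrite (Derive_eq (fun x => DX i j u x) v (DX i (S j) u v)) by (apply dXt; lra)
  | |- context [Derive (fun x => DY ?i ?j ?u x) ?v] => rewrite (Derive_eq (fun x => DY i j u x) v (DY i (S j) u v)) by (apply dYt; lra)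
  end.



Definition W1d cc v c := E1 v c * (- y1 v c / Sf v c) + (kap v c - cc) * (- y2 v c / Sf v c + y1 v c * Sd v c / Sf v c ^ 2).
Definition W2d cc v c := E1 v c * (x1 v c / Sf v c) + (kap v c - cc) * (x2 v c / Sf v c - x1 v c * Sd v c / Sf v c ^ 2).

Lemma E1_ex v c : 0 <= c < T -> ex_derive (fun v => E1 v c) v.
Proof.
  intros Hc. pose proof (Q_pos v c Hc) as HQ. pose proof (Sf_pos v c Hc) as HS.
  unfold E1, Sd, Sf, x1, y1, x2, y2 in *.
  auto_derive. repeat split; try exd; try lra; try (apply Rgt_not_eq; repeat apply Rmult_lt_0_compat; lra).
Qed.

Ltac sidec := repeat split; try exd; try (apply E1_ex; lra); try lra; try (apply Rgt_not_eq; repeat apply Rmult_lt_0_compat; lra).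

Lemma W1_der cc v c : 0 <= c < T -> is_derive (fun v => (kap v c - cc) * (- y1 v c / Sf v c)) v (W1d cc v c).
Proof.
  intros Hc. pose proof (Q_pos v c Hc) as HQ. pose proof (Sf_pos v c Hc) as HS.
  unfold W1d, Sd, Sf, x1, y1, x2, y2 in *.
  auto_derive.
  - sidec.
  - rwD. simpl. field. lra.
Qed.
Lemma W2_der cc v c : 0 <= c < T -> is_derive (fun v => (kap v c - cc) * (x1 v c / Sf v c)) v (W2d cc v c).
Proof.
  intros Hc. pose proof (Q_pos v c Hc) as HQ. pose proof (Sf_pos v c Hc) as HS.
  unfold W2d, Sd, Sf, x1, y1, x2, y2 in *.
  auto_derive.
  - sidec.
  - rwD. simpl. field. lra.
Qed.



Definition G2 u c := Derive (fun v => E1 v c) u.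

Definition W1dd cc u c :=
  let a := x1 u c in let b := y1 u c in let p := x2 u c in let q := y2 u c in
  let r := DX 3%nat 0%nat u c in let w := DY 3%nat 0%nat u c in let S := Sf u c in
  let Sd := (a * p + b * q) / S in
  let Sdd := (p * p + a * r + q * q + b * w) / S - (a * p + b * q) * Sd / S ^ 2 in
  G2 u c * (- b / S) + 2 * E1 u c * (- q / S + b * Sd / S ^ 2)
  + (kap u c - cc) * (- w / S + q * Sd / S ^ 2 + q * Sd / S ^ 2 + b * Sdd / S ^ 2 - 2 * b * Sd ^ 2 / S ^ 3).
Definition W2dd cc u c :=
  let a := x1 u c in let b := y1 u c in let p := x2 u c in let q := y2 u c in
  let r := DX 3%nat 0%nat u c in let w := DY 3%nat 0%nat u c in let S := Sf u c in
  let Sd := (a * p + b * q) / S in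
  let Sdd := (p * p + a * r + q * q + b * w) / S - (a * p + b * q) * Sd / S ^ 2 in
  G2 u c * (a / S) + 2 * E1 u c * (p / S - a * Sd / S ^ 2)
  + (kap u c - cc) * (r / S - p * Sd / S ^ 2 - p * Sd / S ^ 2 - a * Sdd / S ^ 2 + 2 * a * Sd ^ 2 / S ^ 3).

Lemma W1d_der cc u c : 0 <= c < T -> is_derive (fun v => W1d cc v c) u (W1dd cc u c).
Proof.
  intros Hc. pose proof (Q_pos u c Hc) as HQ. pose proof (Sf_pos u c Hc) as HS.
  pose proof (E1_ex u c Hc) as HE.
  unfold W1dd, W1d, G2, Sd, Sf, x1, y1, x2, y2 in *.
  auto_derive.
  - sidec.
  - rwD. simpl. field. lra.
Qed.
Lemma W2d_der cc u c : 0 <= c < T -> is_derive (fun v => W2d cc v c) u (W2dd cc u c).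
Proof.
  intros Hc. pose proof (Q_pos u c Hc) as HQ. pose proof (Sf_pos u c Hc) as HS.
  pose proof (E1_ex u c Hc) as HE.
  unfold W2dd, W2d, G2, Sd, Sf, x1, y1, x2, y2 in *.
  auto_derive.
  - sidec.
  - rwD. simpl. field. lra.
Qed.

Definition KT u c :=
  let a := x1 u c in let b := y1 u c in let p := x2 u c in let q := y2 u c in let S := Sf u c in
  let A := DX 1%nat 1%nat u c in let B := DY 1%nat 1%nat u c in
  let P := DX 2%nat 1%nat u c in let Q := DY 2%nat 1%nat u c in
  (A * q + a * Q - B * p - b * P) / S ^ 3 - 3 * (a * q - b * p) * ((a * A + b * B) / S) / S ^ 4.

Lemma kap_dt u c : 0 < c < T -> is_derive (fun s => kap u s) c (KT u c).
Proof.
  intros Hc. assert (Hc' : 0 <= c < T) by lra.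
  pose proof (Q_pos u c Hc') as HQ. pose proof (Sf_pos u c Hc') as HS.
  unfold KT, kap, Sf, x1, y1, x2, y2 in *.
  auto_derive.
  - sidec.
  - rwD. simpl. field. lra.
Qed.

Lemma KT_formula u c cc : 0 < c < T ->
  (forall v, DX 0%nat 1%nat v c = (kap v c - cc) * (- y1 v c / Sf v c)) ->
  (forall v, DY 0%nat 1%nat v c = (kap v c - cc) * (x1 v c / Sf v c)) ->
  E1 u c = 0 ->
  KT u c = G2 u c / Sf u c ^ 2 + kap u c ^ 2 * (kap u c - cc).
Proof.
  intros Hc H1 H2 HE. assert (Hc' : 0 <= c < T) by lra.
  assert (E11 : forall v, DX 1%nat 1%nat v c = W1d cc v c).
  { intros v. apply (der_uniq (fun v => DX 0%nat 1%nat v c) v).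
    - apply dXu; lra.
    - eapply is_derive_ext; [|apply W1_der; exact Hc']. intros; simpl; rewrite H1; reflexivity. }
  assert (E12 : forall v, DY 1%nat 1%nat v c = W2d cc v c).
  { intros v. apply (der_uniq (fun v => DY 0%nat 1%nat v c) v).
    - apply dYu; lra.
    - eapply is_derive_ext; [|apply W2_der; exact Hc']. intros; simpl; rewrite H2; reflexivity. }
  assert (E21 : DX 2%nat 1%nat u c = W1dd cc u c).
  { apply (der_uniq (fun v => DX 1%nat 1%nat v c) u).
    - apply dXu; lra.
    - eapply is_derive_ext; [|apply W1d_der; exact Hc']. intros; simpl; rewrite E11; reflexivity. }
  assert (E22 : DY 2%nat 1%nat u c = W2dd cc u c).
  { apply (der_uniq (fun v => DY 1%nat 1%nat v c) u).
    - apply dYu; lra.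
    - eapply is_derive_ext; [|apply W2d_der; exact Hc']. intros; simpl; rewrite E12; reflexivity. }
  pose proof (Sf_pos u c Hc') as HS. pose proof (Q_pos u c Hc') as HQ.
  assert (Hrel : Sf u c ^ 2 = x1 u c ^ 2 + y1 u c ^ 2).
  { unfold Sf. rewrite <- Rsqr_pow2. rewrite Rsqr_sqrt by lra. ring. }
  pose proof (core_alg (x1 u c) (y1 u c) (x2 u c) (y2 u c) (DX 3%nat 0%nat u c) (DY 3%nat 0%nat u c)
     (Sf u c) cc (G2 u c) (DX 1%nat 1%nat u c) (DY 1%nat 1%nat u c) (DX 2%nat 1%nat u c) (DY 2%nat 1%nat u c) HS Hrel) as Hc0.
  cbv zeta in Hc0. unfold KT. cbv zeta. unfold kap. apply Hc0.
  - rewrite E11. unfold W1d, Sd, kap. rewrite HE. ring.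
  - rewrite E12. unfold W2d, Sd, kap. rewrite HE. ring.
  - rewrite E21. unfold W1dd, kap. cbv zeta. rewrite HE. ring.
  - rewrite E22. unfold W2dd, kap. cbv zeta. rewrite HE. ring.
Qed.

Variables (fl : Flow) (n : nat).
Hypothesis Hn : (1 <= n)%nat.
Hypothesis Hrot : forall t, 0 <= t < T -> / (2 * PI) * tot_curv X Y t = INR n.
Hypothesis Hflow : forall u t, 0 < t < T ->
     pdt X u t = (curv_tilde X Y u t - gfun fl X Y t / len X Y t) * nu1 X Y u t /\
     pdt Y u t = (curv_tilde X Y u t - gfun fl X Y t / len X Y t) * nu2 X Y u t.

Definition cc t := / len X Y t * tot_curv X Y t + gfun fl X Y t / len X Y t.

Lemma flowX c v : 0 < c < T -> DX 0%nat 1%nat v c = (kap v c - cc c) * (- y1 v c / Sf v c).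
Proof.
  intros Hc. destruct (Hflow v c Hc) as [H _]. rewrite pdtX in H by auto. rewrite H.
  unfold curv_tilde. rewrite curv_eq, nu1_eq by lra. unfold cc. ring.
Qed.
Lemma flowY c v : 0 < c < T -> DY 0%nat 1%nat v c = (kap v c - cc c) * (x1 v c / Sf v c).
Proof.
  intros Hc. destruct (Hflow v c Hc) as [_ H]. rewrite pdtY in H by auto. rewrite H.
  unfold curv_tilde. rewrite curv_eq, nu2_eq by lra. unfold cc. ring.
Qed.

Lemma shift_der (f : R -> R) u l : is_derive f (u + 1) l -> is_derive (fun v => f (v + 1)) u l.
Proof.
  intros H. assert (Hg : is_derive (fun v => v + 1) u 1) by (auto_derive; auto; ring).
  pose proof (is_derive_comp f (fun v => v+1) u l 1 H Hg) as H0.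
  replace l with (scal 1 l). exact H0. apply (scal_one l).
Qed.

Lemma DXper i u c : 0 <= c < T -> DX i 0%nat (u + 1) c = DX i 0%nat u c.
Proof.
  intros Hc. revert u. induction i as [|i IH]; intros u.
  - rewrite !DX0 by auto. apply (proj1 (Hper u c Hc)).
  - apply (der_uniq (fun v => DX i 0%nat (v + 1) c) u).
    + apply (shift_der (fun v => DX i 0%nat v c)). apply dXu; auto.
    + eapply is_derive_ext; [|apply dXu; exact Hc]. intros v; simpl. rewrite IH. reflexivity.
Qed.
Lemma DYper i u c : 0 <= c < T -> DY i 0%nat (u + 1) c = DY i 0%nat u c.
Proof.
  intros Hc. revert u. induction i as [|i IH]; intros u.
  - rewrite !DY0 by auto. apply (proj2 (Hper u c Hc)).
  - apply (der_uniq (fun v => DY i 0%nat (v + 1) c) u).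
    + apply (shift_der (fun v => DY i 0%nat v c)). apply dYu; auto.
    + eapply is_derive_ext; [|apply dYu; exact Hc]. intros v; simpl. rewrite IH. reflexivity.
Qed.
Lemma kap_per u c : 0 <= c < T -> kap (u + 1) c = kap u c.
Proof. intros Hc. unfold kap, Sf, x1, y1, x2, y2. rewrite !DXper, !DYper by auto. reflexivity. Qed.

Lemma per_all (f : R -> R) : (forall u, f (u + 1) = f u) -> forall v, exists w, 0 <= w <= 1 /\ f v = f w.
Proof.
  intros Hf.
  assert (Hn1 : forall m u, f (u + INR m) = f u).
  { induction m; intros u. simpl. f_equal; ring. rewrite S_INR. replace (u + (INR m + 1)) with ((u + INR m) + 1) by ring.
    rewrite Hf. auto. }
  assert (Hn2 : forall m u, f (u - INR m) = f u).
  { intros m u. rewrite <- (Hn1 m (u - INR m)). f_equal; ring. }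
  intros v. exists (frac_part v). pose proof (base_fp v). split; [lra|].
  unfold frac_part. destruct (Z.le_gt_cases 0 (Int_part v)) as [Hz|Hz].
  - destruct (Z_of_nat_complete _ Hz) as [m Hm]. rewrite Hm. rewrite <- INR_IZR_INZ. rewrite Hn2. auto.
  - assert (Hz' : (0 <= - Int_part v)%Z) by lia.
    destruct (Z_of_nat_complete _ Hz') as [m Hm].
    replace (Int_part v) with (- Z.of_nat m)%Z by lia. rewrite opp_IZR, <- INR_IZR_INZ.
    replace (v - - INR m) with (v + INR m) by ring. rewrite Hn1. auto.
Qed.

Lemma der_cont (f : R -> R) x l : is_derive f x l -> continuity_pt f x.
Proof.
  intros H. apply continuity_pt_filterlim. apply (exd_cont f x). exists l; exact H.
Qed.

Lemma kap_cont u c : 0 <= c < T -> continuity_pt (fun v => kap v c) u.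
Proof. intros Hc. apply (der_cont _ u (E1 u c)). apply G_der; auto. Qed.

Lemma Kmax_spec c : 0 <= c < T -> exists u0, 0 <= u0 <= 1 /\ kmax X Y c = kap u0 c /\ forall v, kap v c <= kap u0 c.
Proof.
  intros Hc.
  destruct (continuity_ab_maj (fun v => kap v c) 0 1 ltac:(lra)) as [Mx [HM HMx]].
  { intros; apply kap_cont; auto. }
  assert (Hall : forall v, kap v c <= kap Mx c).
  { intros v. destruct (per_all (fun v => kap v c) (fun u => kap_per u c Hc) v) as [w [Hw Hw2]].
    simpl in Hw2. rewrite Hw2. apply HM; auto. }
  exists Mx. split; auto. split; auto.
  set (E := fun x => exists u, 0 <= u <= 1 /\ x = curv X Y u c).
  assert (Hl : is_lub E (kap Mx c)).
  { split.
    - intros x [u [Hu ->]]. rewrite curv_eq by auto. apply Hall.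
    - intros b Hb. apply Hb. exists Mx. split; auto. rewrite curv_eq; auto. }
  unfold kmax. fold E.
  assert (Hex : exists k, is_lub E k) by (exists (kap Mx c); auto).
  pose proof (epsilon_spec (inhabits 0) _ Hex) as He.
  apply (is_lub_u E); auto.
Qed.

Lemma Rint_ok (f : R -> R) : (forall x, 0 <= x <= 1 -> ex_derive f x) -> Rint f 0 1 = RInt f 0 1 /\ ex_RInt f 0 1.
Proof.
  intros H.
  assert (He : ex_RInt f 0 1) by (apply Rint_ex; auto).
  split; auto. apply Rint_RInt. apply ex_RInt_Reals_0. auto.
Qed.

Ltac exder Hc := intros;
  match goal with |- ex_derive _ ?u =>
    let HQ := fresh in let HS := fresh in
    pose proof (Q_pos u _ Hc) as HQ; pose proof (Sf_pos u _ Hc) as HS;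
    unfold Sf, x1, y1, x2, y2 in *; auto_derive; sidec end.

Lemma tot_eq c : 0 <= c < T -> tot_curv X Y c = RInt (fun u => kap u c * Sf u c) 0 1 /\ ex_RInt (fun u => kap u c * Sf u c) 0 1.
Proof.
  intros Hc. unfold tot_curv.
  replace (fun u => curv X Y u c * speed X Y u c) with (fun u => kap u c * Sf u c).
  2:{ apply functional_extensionality; intros u. rewrite curv_eq, speed_eq by auto. reflexivity. }
  apply Rint_ok. exder Hc.
Qed.

Lemma tot_val c : 0 <= c < T -> tot_curv X Y c = 2 * PI * INR n.
Proof.
  intros Hc. pose proof (Hrot c Hc) as H. pose proof PI_RGT_0.
  rewrite <- H. field. lra.
Qed.

Lemma tot_pos c : 0 <= c < T -> tot_curv X Y c > 0.
Proof.
  intros Hc. rewrite tot_val by auto. pose proof PI_RGT_0.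
  assert (INR n >= 1) by (apply Rle_ge; replace 1 with (INR 1) by reflexivity; apply le_INR; auto).
  nra.
Qed.

Lemma K_pos c : 0 <= c < T -> kmax X Y c > 0.
Proof.
  intros Hc. destruct (Kmax_spec c Hc) as [u0 [Hu0 [HK Hall]]]. rewrite HK.
  destruct (Rlt_le_dec 0 (kap u0 c)) as [h|h]; [lra|exfalso].
  pose proof (tot_pos c Hc) as Ht. destruct (tot_eq c Hc) as [He Hex]. rewrite He in Ht.
  assert (RInt (fun u => kap u c * Sf u c) 0 1 <= RInt (fun _ => 0) 0 1).
  { apply RInt_le; auto. lra. apply ex_RInt_const. intros x Hx.
    pose proof (Sf_pos x c Hc). pose proof (Hall x). nra. }
  rewrite RInt_const in H. unfold scal in H; simpl in H. unfold mult in H; simpl in H. lra.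
Qed.

Lemma JC_DX i j u0 t0 : 0 <= t0 < T -> JC T (fun u t => DX i j u t) u0 t0.
Proof. intros Ht eps He. apply DXc; auto. Qed.
Lemma JC_DY i j u0 t0 : 0 <= t0 < T -> JC T (fun u t => DY i j u t) u0 t0.
Proof. intros Ht eps He. apply DYc; auto. Qed.

Lemma JC_Q u0 t0 : 0 <= t0 < T -> JC T (fun u t => x1 u t * x1 u t + y1 u t * y1 u t) u0 t0.
Proof.
  intros Ht. unfold x1, y1. apply JC_plus; apply JC_mult; try apply JC_DX; try apply JC_DY; auto.
Qed.

Lemma kap_JC u0 t0 : 0 <= t0 < T -> JC T kap u0 t0.
Proof.
  intros Ht.
  apply (JC_ext T (fun u t => (x1 u t * y2 u t - y1 u t * x2 u t) *
     (fun z => / (sqrt z ^ 3)) (x1 u t * x1 u t + y1 u t * y1 u t))).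
  { intros; unfold kap, Sf; simpl. reflexivity. }
  apply JC_mult.
  - unfold x1, x2, y1, y2. apply JC_minus; apply JC_mult; try apply JC_DX; try apply JC_DY; auto.
  - apply (JC_comp T (fun z => / (sqrt z ^ 3))). apply JC_Q; auto.
    pose proof (Q_pos u0 t0 Ht). pose proof (Sf_pos u0 t0 Ht). unfold Sf in *.
    apply cont_of_ex. auto_derive. repeat split; try lra. apply Rgt_not_eq. repeat apply Rmult_lt_0_compat; lra.
Qed.

Lemma K_usc t0 : 0 <= t0 < T -> forall eps, eps > 0 -> exists delta, delta > 0 /\
  forall t, 0 <= t < T -> Rabs (t - t0) < delta -> kmax X Y t < kmax X Y t0 + eps.
Proof.
  intros Ht0 eps He.
  destruct (UL T kap t0 Ht0 (fun u _ => kap_JC u t0 Ht0) eps He) as [d [Hd H]].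
  exists d. split; auto. intros t Ht Htt.
  destruct (Kmax_spec t Ht) as [u [Hu [HK _]]]. destruct (Kmax_spec t0 Ht0) as [u0 [Hu0 [HK0 Hall0]]].
  rewrite HK, HK0. specialize (H u t Ht Htt Hu). apply Rabs_lt_between in H. pose proof (Hall0 u). lra.
Qed.

Lemma KT_le c u0 : 0 < c < T -> 0 <= cc c -> (forall v, kap v c <= kap u0 c) -> KT u0 c <= kap u0 c ^ 3.
Proof.
  intros Hc Hcc Hall. assert (Hc' : 0 <= c < T) by lra.
  pose proof (max_d1 (fun v => kap v c) u0 (E1 u0 c) (G_der u0 c Hc') Hall) as HE.
  pose proof (max_d2 (fun v => kap v c) (fun v => E1 v c) u0 (G2 u0 c) (fun y => G_der y c Hc')
     (Derive_correct _ _ (E1_ex u0 c Hc')) Hall) as HG.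
  rewrite (KT_formula u0 c (cc c) Hc (fun v => flowX c v Hc) (fun v => flowY c v Hc) HE).
  pose proof (Sf_pos u0 c Hc').
  assert (G2 u0 c / Sf u0 c ^ 2 <= 0).
  { unfold Rdiv. apply Rmult_le_0_r; auto. left. apply Rinv_0_lt_compat. nra. }
  assert (0 <= kap u0 c ^ 2 * cc c) by (apply Rmult_le_pos; auto; nra).
  nra.
Qed.

Definition psi e t := / (kmax X Y t ^ 2) + (2 + e) * t.

Lemma dini1 e c : e > 0 -> 0 < c < T -> 0 <= cc c ->
  exists d, d > 0 /\ forall h, 0 < h < d -> psi e (c - h) < psi e c.
Proof.
  intros He Hc Hcc. assert (Hc' : 0 <= c < T) by lra.
  destruct (Kmax_spec c Hc') as [u0 [Hu0 [HK Hall]]].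
  pose proof (K_pos c Hc') as HKp. rewrite HK in HKp.
  pose proof (KT_le c u0 Hc Hcc Hall) as HKT.
  pose proof (kap_dt u0 c Hc) as HF.
  set (z := fun s => / (kap u0 s ^ 2)).
  set (z' := - 2 * KT u0 c / (kap u0 c) ^ 3).
  assert (Hz : is_derive z c z').
  { unfold z, z' in *. auto_derive.
    - split; [exists (KT u0 c); exact HF|]. split; [|auto]. apply Rgt_not_eq. nra.
    - rewrite (Derive_eq (fun x => kap u0 x) c (KT u0 c) HF). field. lra. }
  assert (Hz' : z' >= -2).
  { unfold z'. assert (KT u0 c / (kap u0 c) ^ 3 <= 1).
    { assert (Hk3 : 0 < (kap u0 c) ^ 3) by (apply pow_lt; lra). apply (Rmult_le_reg_r ((kap u0 c) ^ 3)); auto. unfold Rdiv. rewrite Rmult_assoc, Rinv_l by lra. lra. }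
    unfold Rdiv in *. lra. }
  apply is_derive_Reals in Hz.
  destruct (Hz (e / 2) ltac:(lra)) as [d1 Hd1]. pose proof (cond_pos d1).
  destruct (cont_eps (fun s => kap u0 s) c (der_cont _ _ _ HF) ((kap u0 c) / 2) ltac:(lra)) as [d2 [Hd2 Hc2]].
  set (d := Rmin (Rmin d1 d2) c).
  assert (Hd : d > 0) by (unfold d; repeat apply Rmin_glb_lt; lra).
  exists d. split; auto. intros h Hh.
  pose proof (Rmin_l (Rmin d1 d2) c). pose proof (Rmin_r (Rmin d1 d2) c).
  pose proof (Rmin_l d1 d2). pose proof (Rmin_r d1 d2). fold d in H0, H1.
  set (s := c - h).
  assert (Hs : 0 <= s < T) by (unfold s; lra).
  destruct (Kmax_spec s Hs) as [us [Hus [HKs Halls]]].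
  specialize (Hc2 s ltac:(unfold s; rewrite Rabs_left; lra)). simpl in Hc2.
  apply Rabs_lt_between in Hc2. 
  pose proof (Halls u0) as Hle. rewrite <- HKs in Hle.
  assert (HzK : / (kmax X Y s ^ 2) <= z s).
  { unfold z. apply Rinv_le_contravar. nra. apply pow_incr. lra. }
  specialize (Hd1 (- h) ltac:(lra) ltac:(rewrite Rabs_left; lra)).
  replace (c + - h) with s in Hd1 by (unfold s; ring).
  apply Rabs_lt_between in Hd1.
  assert (Hq : z s - z c = (z s - z c) / (- h) * (- h)) by (field; lra).
  assert (Hzs : z s - z c < (2 + e / 2) * h) by nra.
  unfold psi. fold s. rewrite HK.
  assert (z c = / ((kap u0 c) ^ 2)) by reflexivity.
  assert (Hs2 : s = c - h) by reflexivity. nra.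
Qed.

Lemma dini2 e c : e > 0 -> 0 <= c < T -> forall eps, eps > 0 ->
  exists d, d > 0 /\ forall s, c < s < c + d -> s < T -> psi e c <= psi e s + eps.
Proof.
  intros He Hc eps Heps.
  pose proof (K_pos c Hc) as HKc.
  assert (Hcont : continuity_pt (fun y => / (y ^ 2)) (kmax X Y c)).
  { apply cont_of_ex. auto_derive. apply Rgt_not_eq. nra. }
  destruct (cont_eps _ _ Hcont eps Heps) as [r [Hr Hrr]].
  destruct (K_usc c Hc r Hr) as [d [Hd Hdd]].
  exists d. split; auto. intros s Hs HsT.
  assert (Hs' : 0 <= s < T) by lra.
  pose proof (K_pos s Hs') as HKs.
  specialize (Hdd s Hs' ltac:(rewrite Rabs_right; lra)).
  unfold psi. assert (Hlin : (2 + e) * c <= (2 + e) * s) by (apply Rmult_le_compat_l; lra).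
  destruct (Rle_lt_dec (kmax X Y s) (kmax X Y c)) as [h|h].
  - assert (/ (kmax X Y c ^ 2) <= / (kmax X Y s ^ 2)).
    { apply Rinv_le_contravar. nra. apply pow_incr. lra. }
    lra.
  - specialize (Hrr (kmax X Y s) ltac:(rewrite Rabs_right; lra)).
    apply Rabs_lt_between in Hrr. lra.
Qed.

Lemma mono_psi e t tau : e > 0 -> (forall c, 0 < c < T -> 0 <= cc c) -> 0 <= t -> t <= tau -> tau < T ->
  psi e t <= psi e tau.
Proof.
  intros He Hcc Ht Htt HtT.
  apply DM; auto.
  - intros c Hc. apply dini1; auto; try lra. apply Hcc. lra.
  - intros c Hc eps Heps. destruct (dini2 e c He ltac:(lra) eps Heps) as [d [Hd H]].
    exists d. split; auto. intros s Hs Hsb. apply H; auto. lra.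
Qed.

Lemma final_bound : (forall c, 0 < c < T -> 0 <= cc c) ->
  (forall M delta, delta > 0 -> exists t, 0 <= t < T /\ T - delta < t /\ kmax X Y t > M) ->
  forall t, 0 <= t < T -> kmax X Y t >= 1 / sqrt (2 * (T - t)).
Proof.
  intros Hcc Hls t Ht.
  pose proof (K_pos t Ht) as HK.
  assert (Hmain : / (kmax X Y t ^ 2) <= 2 * (T - t)).
  { destruct (Rle_lt_dec (/ (kmax X Y t ^ 2)) (2 * (T - t))) as [h|h]; auto. exfalso.
    set (gap := / (kmax X Y t ^ 2) - 2 * (T - t)).
    assert (Hg : gap > 0) by (unfold gap; lra).
    set (e := gap / (3 * (T + 1))).
    assert (He : e > 0) by (unfold e; apply Rdiv_lt_0_compat; lra).
    assert (HeT : e * T <= gap / 3).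
    { unfold e. apply (Rmult_le_reg_r (3 * (T + 1))). lra.
      field_simplify; try lra. }
    set (M := 3 / gap + 1).
    assert (HM1 : M >= 1) by (unfold M; assert (3 / gap > 0) by (apply Rdiv_lt_0_compat; lra); lra).
    destruct (Hls M (T - t) ltac:(lra)) as [tau [Htau [Htau2 HKtau]]].
    pose proof (mono_psi e t tau He Hcc ltac:(lra) ltac:(lra) ltac:(lra)) as Hm.
    unfold psi in Hm.
    assert (HinvM : / (kmax X Y tau ^ 2) < gap / 3).
    { assert (3 / gap < kmax X Y tau ^ 2).
      { assert (M <= M ^ 2) by nra. unfold M in *. nra. }
      apply (Rmult_lt_reg_r (kmax X Y tau ^ 2)). nra.
      rewrite Rinv_l by nra.
      apply (Rmult_lt_reg_l (3 / gap)). apply Rdiv_lt_0_compat; lra.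
      replace (3 / gap * (gap / 3 * kmax X Y tau ^ 2)) with (kmax X Y tau ^ 2) by (field; lra). lra. }
    assert (Hineq : / (kmax X Y t ^ 2) < gap / 3 + 2 * (T - t) + e * T).
    { assert (Hl2 : (2 + e) * tau - (2 + e) * t <= 2 * (T - t) + e * T) by nra. lra. }
    assert (Hgap : gap = / (kmax X Y t ^ 2) - 2 * (T - t)) by reflexivity. lra. }
  assert (HTt : 2 * (T - t) > 0) by lra.
  set (q := 1 / sqrt (2 * (T - t))).
  pose proof (sqrt_lt_R0 _ HTt) as Hsq.
  assert (Hq : q > 0) by (unfold q; apply Rdiv_lt_0_compat; lra).
  assert (Hq2 : q ^ 2 = / (2 * (T - t))).
  { unfold q. rewrite <- Rsqr_pow2. unfold Rsqr. unfold Rdiv. rewrite !Rmult_1_l.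
    rewrite <- Rinv_mult. rewrite sqrt_sqrt by lra. reflexivity. }
  assert (HK2 : kmax X Y t ^ 2 >= q ^ 2).
  { rewrite Hq2. apply Rle_ge. rewrite <- (Rinv_inv (kmax X Y t ^ 2)).
    apply Rinv_le_contravar; auto. apply Rinv_0_lt_compat. nra. }
  apply Rle_ge. fold q. nra.
Qed.

Lemma loc_in t0 (P : R -> Prop) : 0 < t0 < T -> (forall x, 0 < x < T -> P x) -> locally t0 P.
Proof.
  intros Ht HP.
  assert (Hd : 0 < Rmin t0 (T - t0)) by (apply Rmin_glb_lt; lra).
  exists (mkposreal _ Hd). intros s Hs. simpl in Hs. unfold ball in Hs; simpl in Hs.
  unfold AbsRing_ball, abs, minus, plus, opp in Hs; simpl in Hs.
  apply HP. pose proof (Rmin_l t0 (T-t0)); pose proof (Rmin_r t0 (T-t0)).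
  apply Rabs_lt_between in Hs. lra.
Qed.

Definition hA u t := - DX 0%nat 0%nat u t * DY 1%nat 0%nat u t + DY 0%nat 0%nat u t * DX 1%nat 0%nat u t.
Definition hAt u t := - DX 0%nat 1%nat u t * DY 1%nat 0%nat u t - DX 0%nat 0%nat u t * DY 1%nat 1%nat u t
   + DY 0%nat 1%nat u t * DX 1%nat 0%nat u t + DY 0%nat 0%nat u t * DX 1%nat 1%nat u t.
Definition Hf t := RInt (fun u => hA u t) 0 1.

Lemma hA_exu u t : 0 <= t < T -> ex_derive (fun v => hA v t) u.
Proof. intros Ht. unfold hA. auto_derive. repeat split; try exd0. Qed.

Lemma area_eq t : 0 <= t < T -> area X Y t = - / 2 * Hf t /\ ex_RInt (fun u => hA u t) 0 1.
Proof.
  intros Ht. unfold area, Hf.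
  replace (fun u => (X u t * nu1 X Y u t + Y u t * nu2 X Y u t) * speed X Y u t) with (fun u => hA u t).
  2:{ apply functional_extensionality; intros u. rewrite nu1_eq, nu2_eq, speed_eq, <- DX0, <- DY0 by auto.
      pose proof (Sf_pos u t Ht). unfold hA, x1, y1. field. lra. }
  destruct (Rint_ok (fun u => hA u t)) as [E1' E2]. { intros; apply hA_exu; auto. }
  rewrite E1'. auto.
Qed.

Lemma hA_dt u t : 0 < t < T -> is_derive (fun s => hA u s) t (hAt u t).
Proof. intros Ht. unfold hA, hAt. auto_derive. repeat split; try exd. rwD. ring. Qed.

Lemma hAt_JC u t0 : 0 <= t0 < T -> JC T hAt u t0.
Proof.
  intros Ht. unfold hAt.
  repeat first [apply JC_plus | apply JC_minus | apply JC_mult | apply JC_opp | apply JC_DX; auto | apply JC_DY; auto].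
Qed.

Lemma Hf_der t0 : 0 < t0 < T -> is_derive Hf t0 (RInt (fun u => hAt u t0) 0 1).
Proof.
  intros Ht0.
  pose proof (is_derive_RInt_param (fun s u => hA u s) 0 1 t0) as HP.
  assert (Hmin : Rmin 0 1 = 0) by (apply Rmin_left; lra).
  assert (Hmax : Rmax 0 1 = 1) by (apply Rmax_right; lra).
  rewrite Hmin, Hmax in HP.
  assert (E : RInt (fun u => Derive (fun z => hA u z) t0) 0 1 = RInt (fun u => hAt u t0) 0 1).
  { apply RInt_ext. intros x _. apply Derive_eq. apply hA_dt; auto. }
  rewrite <- E. unfold Hf. apply HP.
  - apply loc_in; auto. intros x Hx u Hu. exists (hAt u x). apply hA_dt; auto.
  - intros u Hu eps.
    destruct (hAt_JC u t0 ltac:(lra) eps (cond_pos eps)) as [d [Hd Hdd]].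
    assert (Hd' : 0 < Rmin d (Rmin t0 (T - t0))) by (repeat apply Rmin_glb_lt; lra).
    exists (mkposreal _ Hd'). intros x y Hx Hy. simpl in Hx, Hy.
    pose proof (Rmin_l d (Rmin t0 (T - t0))). pose proof (Rmin_r d (Rmin t0 (T - t0))).
    pose proof (Rmin_l t0 (T - t0)). pose proof (Rmin_r t0 (T - t0)).
    assert (Hx1 : 0 < x < T) by (apply Rabs_lt_between in Hx; lra).
    rewrite (Derive_eq (fun z => hA y z) x _ (hA_dt y x Hx1)). rewrite (Derive_eq (fun z => hA u z) t0 _ (hA_dt u t0 Ht0)).
    apply Hdd; try lra.
  - apply loc_in; auto. intros x Hx. apply Rint_ex. intros; apply hA_exu; lra.
Qed.

Definition Bfun u t := DY 0%nat 0%nat u t * DX 0%nat 1%nat u t - DX 0%nat 0%nat u t * DY 0%nat 1%nat u t.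
Definition Bd u t := DY 1%nat 0%nat u t * DX 0%nat 1%nat u t + DY 0%nat 0%nat u t * DX 1%nat 1%nat u t
   - DX 1%nat 0%nat u t * DY 0%nat 1%nat u t - DX 0%nat 0%nat u t * DY 1%nat 1%nat u t.

Lemma Bfun_der u t : 0 <= t < T -> is_derive (fun v => Bfun v t) u (Bd u t).
Proof. intros Ht. unfold Bfun, Bd. auto_derive. repeat split; try exd0. rwD0. ring. Qed.

Lemma Bd_int t : 0 < t < T -> is_RInt (fun u => Bd u t) 0 1 0.
Proof.
  intros Ht. assert (Ht' : 0 <= t < T) by lra.
  assert (Hper1 : Bfun 1 t = Bfun 0 t).
  { unfold Bfun. rewrite !flowX, !flowY by auto. replace 1 with (0 + 1) by ring.
    unfold kap, Sf, x1, y1, x2, y2. rewrite !DXper, !DYper by auto. reflexivity. }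
  assert (H : is_RInt (fun u => Bd u t) 0 1 (minus (Bfun 1 t) (Bfun 0 t))).
  { apply (@is_RInt_derive R_CompleteNormedModule (fun v => Bfun v t)).
    - intros; apply Bfun_der; auto.
    - intros x _. apply exd_cont. unfold Bd. auto_derive. repeat split; try exd0. }
  rewrite Hper1 in H. replace (minus (Bfun 0 t) (Bfun 0 t)) with 0 in H; auto.
  unfold minus, plus, opp; simpl. ring.
Qed.

Lemma Sf_exu u t : 0 <= t < T -> ex_derive (fun v => Sf v t) u.
Proof. exder H. Qed.

Lemma len_eq t : 0 <= t < T -> len X Y t = RInt (fun u => Sf u t) 0 1 /\ ex_RInt (fun u => Sf u t) 0 1.
Proof.
  intros Ht. unfold len.
  replace (fun u => speed X Y u t) with (fun u => Sf u t).
  2:{ apply functional_extensionality; intros u. rewrite speed_eq; auto. }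
  apply Rint_ok. intros; apply Sf_exu; auto.
Qed.

Lemma len_pos t : 0 <= t < T -> len X Y t > 0.
Proof.
  intros Ht. destruct (len_eq t Ht) as [-> _].
  assert (H : RInt (fun _ => 0) 0 1 < RInt (fun u => Sf u t) 0 1).
  { apply RInt_lt. lra. intros; apply exd_cont; apply Sf_exu; auto.
    intros; apply continuous_const. intros; apply Sf_pos; auto. }
  rewrite RInt_const in H. unfold scal in H; simpl in H. unfold mult in H; simpl in H. lra.
Qed.

Lemma hAt_pt u t : 0 < t < T -> hAt u t = 2 * (kap u t * Sf u t - cc t * Sf u t) + Bd u t.
Proof.
  intros Ht. assert (Ht' : 0 <= t < T) by lra.
  pose proof (Sf_pos u t Ht'). pose proof (Q_pos u t Ht').
  assert (Hrel : Sf u t * Sf u t = x1 u t * x1 u t + y1 u t * y1 u t) by (unfold Sf; apply sqrt_sqrt; lra).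
  replace (kap u t * Sf u t - cc t * Sf u t) with ((kap u t - cc t) * (Sf u t * Sf u t) / Sf u t) by (field; lra).
  rewrite Hrel. unfold hAt, Bd. rewrite !flowX, !flowY by auto. unfold x1, y1. field. lra.
Qed.

Lemma hAt_int t : 0 < t < T -> RInt (fun u => hAt u t) 0 1 = 2 * (tot_curv X Y t - cc t * len X Y t).
Proof.
  intros Ht. assert (Ht' : 0 <= t < T) by lra.
  destruct (tot_eq t Ht') as [Etot Htot]. destruct (len_eq t Ht') as [EL HL].
  apply is_RInt_unique.
  apply (is_RInt_ext (fun u => plus (scal 2 (minus (kap u t * Sf u t) (scal (cc t) (Sf u t)))) (Bd u t))).
  { intros u _. rewrite hAt_pt by auto. cbn. unfold mult, plus, opp; cbn. ring. }
  replace (2 * (tot_curv X Y t - cc t * len X Y t)) with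
    (plus (scal 2 (minus (tot_curv X Y t) (scal (cc t) (len X Y t)))) 0)
    by (cbn; unfold mult, plus, opp; cbn; ring).
  apply (@is_RInt_plus R_NormedModule); [|apply Bd_int; auto].
  apply (@is_RInt_scal R_NormedModule). apply (@is_RInt_minus R_NormedModule).
  - rewrite Etot. apply (@RInt_correct R_CompleteNormedModule). auto.
  - apply (@is_RInt_scal R_NormedModule). rewrite EL. apply (@RInt_correct R_CompleteNormedModule). auto.
Qed.


Lemma area_der_cc t : 0 < t < T -> is_derive (fun s => area X Y s) t (cc t * len X Y t - tot_curv X Y t).
Proof.
  intros Ht.
  apply (is_derive_ext_loc (fun s => - / 2 * Hf s)).
  { apply loc_in; auto. intros x Hx. symmetry. apply area_eq. lra. }
  pose proof (Hf_der t Ht) as HD. rewrite hAt_int in HD by auto.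
  auto_derive. exists (2 * (tot_curv X Y t - cc t * len X Y t)); auto.
  rewrite (Derive_eq (fun x => Hf x) t _ HD). field.
Qed.

Lemma RInt_addc (f : R -> R) c : ex_RInt f 0 1 -> RInt (fun x => f x + c) 0 1 = RInt f 0 1 + c.
Proof.
  intros H. apply is_RInt_unique.
  replace (RInt f 0 1 + c) with (plus (RInt f 0 1) (scal (1 - 0) c)) by (cbn; unfold mult, plus; cbn; ring).
  apply (@is_RInt_plus R_NormedModule). apply (@RInt_correct R_CompleteNormedModule); auto.
  apply (@is_RInt_const R_NormedModule).
Qed.

Lemma RInt_near F t0 : 0 <= t0 < T -> (forall u, 0 <= u <= 1 -> JC T F u t0) ->
  (forall t, 0 <= t < T -> ex_RInt (fun u => F u t) 0 1) ->
  forall e, e > 0 -> exists d, d > 0 /\ forall t, 0 <= t < T -> Rabs (t - t0) < d ->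
    Rabs (RInt (fun u => F u t) 0 1 - RInt (fun u => F u t0) 0 1) < e.
Proof.
  intros Ht0 HJ Hex e He.
  destruct (UL T F t0 Ht0 HJ (e / 2) ltac:(lra)) as [d [Hd Hdd]].
  exists d. split; auto. intros t Ht Htt.
  assert (Hup : RInt (fun u => F u t) 0 1 <= RInt (fun u => F u t0 + e / 2) 0 1).
  { apply RInt_le; [lra|auto| |].
    - apply (@ex_RInt_plus R_NormedModule); auto. apply ex_RInt_const.
    - intros x Hx. specialize (Hdd x t Ht Htt ltac:(lra)). apply Rabs_lt_between in Hdd. lra. }
  assert (Hlo : RInt (fun u => F u t0 + - (e / 2)) 0 1 <= RInt (fun u => F u t) 0 1).
  { apply RInt_le; [lra| |auto|].
    - apply (@ex_RInt_plus R_NormedModule); auto. apply ex_RInt_const.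
    - intros x Hx. specialize (Hdd x t Ht Htt ltac:(lra)). apply Rabs_lt_between in Hdd. lra. }
  rewrite RInt_addc in Hup, Hlo by auto.
  apply Rabs_lt_between. lra.
Qed.

Lemma Sf_JC u t0 : 0 <= t0 < T -> JC T Sf u t0.
Proof.
  intros Ht. unfold Sf. apply (JC_comp T sqrt (fun u t => x1 u t * x1 u t + y1 u t * y1 u t)).
  apply JC_Q; auto. apply continuity_pt_sqrt. pose proof (Q_pos u t0 Ht). lra.
Qed.

Lemma hA_JC u t0 : 0 <= t0 < T -> JC T hA u t0.
Proof.
  intros Ht. unfold hA.
  repeat first [apply JC_plus | apply JC_minus | apply JC_mult | apply JC_opp | apply JC_DX; auto | apply JC_DY; auto].
Qed.

Lemma area_cont0 : forall e, e > 0 -> exists d, d > 0 /\ forall t, 0 <= t < d -> t < T -> Rabs (area X Y t - area X Y 0) < e.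
Proof.
  intros e He.
  destruct (RInt_near hA 0 ltac:(lra) (fun u _ => hA_JC u 0 ltac:(lra))
    (fun t Ht => proj2 (area_eq t Ht)) (2 * e) ltac:(lra)) as [d [Hd Hdd]].
  exists d. split; auto. intros t Ht HtT.
  rewrite (proj1 (area_eq t ltac:(lra))), (proj1 (area_eq 0 ltac:(lra))).
  specialize (Hdd t ltac:(lra) ltac:(rewrite Rabs_right; lra)). unfold Hf.
  replace (- / 2 * RInt (fun u => hA u t) 0 1 - - / 2 * RInt (fun u => hA u 0) 0 1) with
    (- / 2 * (RInt (fun u => hA u t) 0 1 - RInt (fun u => hA u 0) 0 1)) by ring.
  rewrite Rabs_mult. rewrite Rabs_left by lra. lra.
Qed.

Lemma len_cont t : 0 < t < T -> forall e, e > 0 -> exists d, d > 0 /\ forall s, Rabs (s - t) < d -> Rabs (len X Y s - len X Y t) < e.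
Proof.
  intros Ht e He.
  destruct (RInt_near Sf t ltac:(lra) (fun u _ => Sf_JC u t ltac:(lra))
    (fun t Ht => proj2 (len_eq t Ht)) e He) as [d [Hd Hdd]].
  assert (Hd' : 0 < Rmin d (Rmin t (T - t))) by (repeat apply Rmin_glb_lt; lra).
  exists (Rmin d (Rmin t (T - t))). split; auto. intros s Hs.
  pose proof (Rmin_l d (Rmin t (T - t))). pose proof (Rmin_r d (Rmin t (T - t))).
  pose proof (Rmin_l t (T - t)). pose proof (Rmin_r t (T - t)).
  assert (Hs' : 0 <= s < T) by (apply Rabs_lt_between in Hs; lra).
  rewrite (proj1 (len_eq s Hs')), (proj1 (len_eq t ltac:(lra))). apply Hdd; auto. lra.
Qed.

Lemma cc_nonneg : area X Y 0 > 0 -> forall c, 0 < c < T -> 0 <= cc c.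
Proof.
  intros HA0 c Hc. assert (Hc' : 0 <= c < T) by lra.
  pose proof (len_pos c Hc') as HL. pose proof (tot_pos c Hc') as Htot.
  assert (HiL : 0 < / len X Y c) by (apply Rinv_0_lt_compat; lra).
  assert (Hcase : fl = AP \/ fl = LP \/ fl = JP) by (destruct fl; auto).
  unfold cc. destruct Hcase as [Hfl|[Hfl|Hfl]]; unfold gfun; rewrite Hfl.
  - unfold Rdiv. rewrite Rmult_0_l. apply Rplus_le_le_0_compat; [|lra]. apply Rmult_le_pos; lra.
  - set (I := Rint (fun u => curv_tilde X Y u c ^ 2 * speed X Y u c) 0 1).
    assert (HI : 0 <= I).
    { unfold I. replace (fun u => curv_tilde X Y u c ^ 2 * speed X Y u c) with
         (fun u => (kap u c - / len X Y c * tot_curv X Y c) ^ 2 * Sf u c).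
      2:{ apply functional_extensionality; intros u. unfold curv_tilde. rewrite curv_eq, speed_eq; auto. }
      destruct (Rint_ok (fun u => (kap u c - / len X Y c * tot_curv X Y c) ^ 2 * Sf u c)) as [-> Hex].
      { exder Hc'. }
      apply RInt_ge_0; auto. lra. intros x Hx. pose proof (Sf_pos x c Hc').
      apply Rmult_le_pos; [apply pow2_ge_0|lra]. }
    assert (0 <= len X Y c * / tot_curv X Y c * I / len X Y c).
    { unfold Rdiv. repeat apply Rmult_le_pos; try lra. left; apply Rinv_0_lt_compat; lra. }
    assert (0 <= / len X Y c * tot_curv X Y c) by (apply Rmult_le_pos; lra).
    lra.
  - assert (HA : area X Y c >= 0).
    { apply (area_pos (area X Y) (len X Y) (2 * PI * INR n) T); auto.
      - pose proof (tot_pos 0 ltac:(lra)). rewrite tot_val in H by lra. lra.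
      - apply area_cont0.
      - intros t Ht. pose proof (area_der_cc t Ht) as HD.
        replace (len X Y t ^ 2 / (2 * area X Y t) - 2 * PI * INR n) with (cc t * len X Y t - tot_curv X Y t); auto.
        pose proof (len_pos t ltac:(lra)). rewrite <- (tot_val t) by lra.
        unfold cc, gfun. rewrite Hfl. unfold Rdiv. set (w := / (2 * area X Y t)). field. lra.
      - intros t Ht. apply len_pos; lra.
      - apply len_cont. }
    replace (/ len X Y c * tot_curv X Y c + (len X Y c ^ 2 / (2 * area X Y c) - tot_curv X Y c) / len X Y c)
      with (len X Y c ^ 2 / (2 * area X Y c) * / len X Y c) by (unfold Rdiv; set (w := / (2 * area X Y c)); field; lra).
    apply Rmult_le_pos; [|lra].
    destruct (Req_dec (area X Y c) 0) as [h0|h0].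
    + rewrite h0. replace (2 * 0) with 0 by ring. unfold Rdiv. rewrite Rinv_0. lra.
    + unfold Rdiv. apply Rmult_le_pos. apply pow2_ge_0. left. apply Rinv_0_lt_compat. lra.
Qed.

Lemma main_sec : area X Y 0 > 0 ->
  (forall M delta, delta > 0 -> exists t, 0 <= t < T /\ T - delta < t /\ kmax X Y t > M) ->
  forall t, 0 <= t < T -> kmax X Y t >= 1 / sqrt (2 * (T - t)).
Proof. intros HA0. apply final_bound. apply cc_nonneg; auto. Qed.

End Main.

Theorem mainTheorem16 (fl : Flow) (n : nat) (X Y : R -> R -> R) (T : R) :
  (1 <= n)%nat ->
  maximal_solution fl n X Y T ->
  area X Y 0 > 0 ->
  (forall M delta, delta > 0 ->
     exists t, 0 <= t < T /\ T - delta < t /\ kmax X Y t > M) ->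
  forall t, 0 <= t < T -> kmax X Y t >= 1 / sqrt (2 * (T - t)).
Proof.
  intros Hn [[HT [[DX [DX0 [DXu [DXt DXc]]]] [[DY [DY0 [DYu [DYt DYc]]]] [Hper [Hspeed [Hrot Hflow]]]]]] _] HA0 Hls.
  eapply (main_sec X Y T DX DY); eauto.
Qed.
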